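(* Let $p$ and $p'$ be consecutive patterns of the same length $r$ that are non-overlapping, mutually non-overlapping, and interchangeable. Then for all $n$ and all $S,T\subseteq[n]$, $$|\{e\in\mathbf{I}_n:\mathrm{Em}(p,e)=S,\ \mathrm{Em}(p',e)=T\}|=|\{e\in\mathbf{I}_n:\mathrm{Em}(p,e)=T,\ \mathrm{Em}(p',e)=S\}|.$$ In particular, $p$ and $p'$ are super-strongly Wilf equivalent.
   Context: An inversion sequence of length $n$ is an integer sequence $e=e_1e_2\dots e_n$ with $0\le e_i<i$ for all $i$; $\mathbf{I}_n$ denotes the set of these. A pattern of length $r$ is a sequence $p=p_1\dots p_r$ with $p_i\in\{0,\dots,r-1\}$ such that whenever a value $j>0$ appears in $p$, the value $j-1$ also appears. The reduction of an integer word $w$ is obtained by replacing every occurrence of the $i$-th smallest distinct value of $w$ by $i-1$. An inversion sequence $e$ has an occurrence of the consecutive pattern $p$ in position $i$ if the reduction of $e_i\dots e_{i+r-1}$ equals $p$; $\mathrm{Em}(p,e)$ is the set of such positions. $p=p_1\dots p_r$ is non-overlapping if for every $1<i<r$ the reductions of $p_1\dots p_i$ and $p_{r-i+1}\dots p_r$ differ. $p,p'$ (both of length $r$) are mutually non-overlapping if for every $1<i<r$ the reductions of $p_1\dots p_i$ and $p'_{r-i+1}\dots p'_r$ differ, and the reductions of $p'_1\dots p'_i$ and $p_{r-i+1}\dots p_r$ differ. Given patterns $p,p'$ of length $r$ with $p_1=p'_1$, $p_r=p'_r$ and $\max_i p_i=\max_i p'_i$, $p$ is changeable for $p'$ if for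 all $1\le i\le r$, $p'_i\le\max(\{p_j:1\le j\le i\}\cup\{p_j-j+i: i<j\le r\})$; $p$ and $p'$ are interchangeable if each is changeable for the other. Two patterns are super-strongly Wilf equivalent if $|\{e\in\mathbf{I}_n:\mathrm{Em}(p,e)=T\}|=|\{e\in\mathbf{I}_n:\mathrm{Em}(p',e)=T\}|$ for all $n$ and all $T\subseteq[n]$. *)

(* Defs.v *)
From mathcomp Require Import all_boot.
Set Implicit Arguments. Unset Strict Implicit. Unset Printing Implicit Defensive.

(* Sequences are 0-indexed: entry k (0-based) of a seq is entry k+1 of the paper. *)

(* Inversion sequences of length n: e_(k+1) < k+1, i.e. e_k <= k (0-based). *)
Definition invseq (n : nat) : {set n.-tuple 'I_n} :=
  [set e : n.-tuple 'I_n | [forall i : 'I_n, (tnth e i : nat) <= i]].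

(* reduction: the i-th smallest distinct value (i = 1,2,..) becomes i-1 *)
Definition reduce (w : seq nat) : seq nat :=
  [seq index x (sort leq (undup w)) | x <- w].

Definition is_pattern (p : seq nat) : bool :=
  all (fun x => x < size p) p &&
  all (fun j => (0 < j) ==> (j.-1 \in p)) p.

(* occurrence of p in w starting at 0-based position i (paper position i+1) *)
Definition occurs_at (p w : seq nat) (i : nat) : bool :=
  (i + size p <= size w) && (reduce (take (size p) (drop i w)) == p).

(* Em(p,e), as a set of 0-based positions (position i <-> paper position i+1) *)
Definition Em (p : seq nat) (n : nat) (e : n.-tuple 'I_n) : {set 'I_n} :=
  [set i : 'I_n | occurs_at p [seq val x | x <- e] i].

(* reduction of p_1..p_i is take i p; reduction of p_{r-i+1}..p_r is drop (r-i) p *)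
Definition non_overlapping (p : seq nat) : bool :=
  [forall i : 'I_(size p), (1 < i) ==>
     (reduce (take i p) != reduce (drop (size p - i) p))].

Definition mutually_non_overlapping (p p' : seq nat) : bool :=
  (size p == size p') &&
  [forall i : 'I_(size p), (1 < i) ==>
     ((reduce (take i p) != reduce (drop (size p' - i) p')) &&
      (reduce (take i p') != reduce (drop (size p - i) p)))].

Definition maxs (s : seq nat) : nat := \max_(x <- s) x.

(* p is changeable for p' ; 0-based index k corresponds to paper index i = k+1.
   The term p_j - j + i (j > i) is computed with truncated subtraction, which
   does not change the max since the first part of the set contains p_1 >= 0. *)
Definition changeable (p p' : seq nat) : bool :=
  let r := size p in
  [&& size p' == r,
      head 0 p == head 0 p',
      last 0 p == last 0 p',
      maxs p == maxs p' &
      [forall k : 'I_r,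
         nth 0 p' k <= maxn (\max_(j < r | j <= k) nth 0 p j)
                            (\max_(j < r | k < j) (nth 0 p j - (j - k)))]].

Definition interchangeable (p p' : seq nat) : bool :=
  changeable p p' && changeable p' p.

Definition super_strongly_Wilf_equiv (p p' : seq nat) : Prop :=
  forall (n : nat) (T : {set 'I_n}),
    #|[set e in invseq n | Em p e == T]| = #|[set e in invseq n | Em p' e == T]|.

(* Main.v *)
Require Import Defs.
From mathcomp Require Import all_boot zify.

Lemma SU (X Y : seq nat) : sorted ltn Y -> X =i Y -> sort leq (undup X) = Y.
Proof.
move=> sY XY; apply: (sorted_eq leq_trans anti_leq).
- by apply: sort_sorted; exact: leq_total.
- by apply: sub_sorted sY => x y /ltnW.
have uY : uniq Y by apply: (sorted_uniq ltn_trans ltnn).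
apply: uniq_perm => //; first by rewrite sort_uniq undup_uniq.
by move=> x; rewrite mem_sort mem_undup XY.
Qed.

Lemma sorted_V (u : seq nat) : sorted ltn (sort leq (undup u)).
Proof.
rewrite ltn_sorted_uniq_leq sort_uniq undup_uniq /=.
by apply: sort_sorted; exact: leq_total.
Qed.

Lemma index_map_in (f : nat -> nat) (S : seq nat) x :
  {in S &, injective f} -> x \in S -> index (f x) (map f S) = index x S.
Proof.
elim: S => [//|y S IH] inj /= xin.
have [->|ne] := eqVneq y x; first by rewrite eqxx.
have fne : f y != f x.
  by apply/negP => /eqP fe; move: (inj y x (mem_head _ _) xin fe) => /eqP; rewrite (negbTE ne).
rewrite (negbTE fne) IH //.
  by move=> a b ha hb; apply: inj; rewrite in_cons ?ha ?hb orbT.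
by move: xin; rewrite in_cons eq_sym (negbTE ne).
Qed.

Lemma R1 (f : nat -> nat) (s : seq nat) :
  {in s &, forall x y, x < y -> f x < f y} -> reduce (map f s) = reduce s.
Proof.
move=> mono.
have inj : {in s &, injective f}.
  move=> x y hx hy fe; apply/eqP; rewrite eqn_leq.
  apply/andP; split; rewrite leqNgt; apply/negP => lt.
    by have := mono _ _ hy hx lt; rewrite fe ltnn.
  by have := mono _ _ hx hy lt; rewrite fe ltnn.
set S := sort leq (undup s).
have memS : S =i s by move=> x; rewrite mem_sort mem_undup.
rewrite /reduce.
have -> : sort leq (undup (map f s)) = map f S.
  apply: SU.
    apply: (homo_sorted_in (P := fun x => x \in s)).
    - by move=> x y hx hy; apply: mono.
    - by apply/allP => x; rewrite memS.
    exact: sorted_V.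
  move=> x; apply/mapP/mapP => -[y hy ->]; exists y => //.
    by rewrite memS.
  by rewrite -memS.
rewrite -map_comp. apply/eq_in_map => x xs /=.
rewrite index_map_in //; last by rewrite memS.
by move=> a b; rewrite !memS; apply: inj.
Qed.

Definition Vs (u : seq nat) := sort leq (undup u).

Lemma Vs_mono (u : seq nat) :
  {in u &, forall x y, x < y -> index x (Vs u) < index y (Vs u)}.
Proof.
move=> x y hx hy lt.
have hx' : x \in Vs u by rewrite mem_sort mem_undup.
have hy' : y \in Vs u by rewrite mem_sort mem_undup.
rewrite ltnNge leq_eqVlt; apply/negP => /orP [/eqP e|].
  have := congr1 (nth 0 (Vs u)) e; rewrite !nth_index // => e'.
  by move: lt; rewrite e' ltnn.
move/(sorted_ltn_index leq_trans (sort_sorted leq_total _) _ _ hy' hx').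
by rewrite leqNgt lt.
Qed.

Lemma reduceE (u : seq nat) : reduce u = map (fun x => index x (Vs u)) u.
Proof. by []. Qed.

Lemma reduce_drop (u : seq nat) j : reduce (drop j (reduce u)) = reduce (drop j u).
Proof.
rewrite [reduce u]reduceE -map_drop R1 //.
by move=> x y hx hy; apply: Vs_mono; apply: mem_drop; [exact: hx|exact: hy].
Qed.

Lemma reduce_take (u : seq nat) j : reduce (take j (reduce u)) = reduce (take j u).
Proof.
rewrite [reduce u]reduceE -map_take R1 //.
by move=> x y hx hy; apply: Vs_mono; apply: mem_take; [exact: hx|exact: hy].
Qed.

Lemma SU_map (V Q : seq nat) : sorted ltn V -> Q =i iota 0 (size V) ->
  sort leq (undup (map (nth 0 V) Q)) = V.
Proof.
move=> sV QV; apply: SU => // x; apply/mapP/idP.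
  by move=> [i]; rewrite QV mem_iota /= => lt ->; exact: mem_nth.
move=> xV; exists (index x V); last by rewrite nth_index.
by rewrite QV mem_iota /= index_mem.
Qed.

Lemma reduce_mapV (V Q : seq nat) : sorted ltn V -> Q =i iota 0 (size V) ->
  reduce (map (nth 0 V) Q) = Q.
Proof.
move=> sV QV; rewrite /reduce SU_map // -map_comp.
have uV : uniq V by apply: (sorted_uniq ltn_trans ltnn).
rewrite -[RHS]map_id; apply/eq_in_map => i iQ /=.
by rewrite index_uniq //; move: iQ; rewrite QV mem_iota.
Qed.

Lemma index_iota0 k x : x < k -> index x (iota 0 k) = x.
Proof.
move=> lt; have := index_uniq 0 (s := iota 0 k) (i := x).
by rewrite size_iota nth_iota // add0n iota_uniq => ->.
Qed.

Lemma maxs_cons x s : maxs (x :: s) = maxn x (maxs s).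
Proof. by rewrite /maxs big_cons. Qed.

Lemma le_maxs P x : x \in P -> x <= maxs P.
Proof.
elim: P => [//|y P IH]; rewrite in_cons maxs_cons => /orP [/eqP ->|/IH].
  exact: leq_maxl.
move=> h; exact: (leq_trans h (leq_maxr _ _)).
Qed.

Lemma maxs_mem P : P != [::] -> maxs P \in P.
Proof.
elim: P => [//|y P IH] _; rewrite maxs_cons.
case: P IH => [|z P] IH.
  by rewrite /maxs big_nil maxn0 mem_head.
have := IH isT; rewrite /maxn; case: ifP => _ h.
  by rewrite in_cons h orbT.
by rewrite mem_head.
Qed.

Lemma pat_down P i j : is_pattern P -> i \in P -> j <= i -> j \in P.
Proof.
move=> /andP [_ /allP dn] iP ji.
have : forall d, i - d \in P.
  elim=> [|d IH]; first by rewrite subn0.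
  case e : (i - d) IH => [|m] IH.
    by have -> : i - d.+1 = 0 by lia.
  have h : m \in P by move: (dn _ IH).
  by have -> : i - d.+1 = m by lia.
by move/(_ (i - j)); have -> : i - (i - j) = j by lia.
Qed.

Lemma pat_mem P : is_pattern P -> P != [::] -> P =i iota 0 (maxs P).+1.
Proof.
move=> pP ne x; rewrite mem_iota /= add0n ltnS.
apply/idP/idP; first exact: le_maxs.
by move=> h; exact: (pat_down _ _ _ pP (maxs_mem _ ne) h).
Qed.

Lemma reduce_pat P : is_pattern P -> reduce P = P.
Proof.
case: (eqVneq P [::]) => [->//|ne] pP.
rewrite reduceE.
have hV : Vs P = iota 0 (maxs P).+1 by apply: SU; [exact: iota_ltn_sorted| exact: pat_mem].
rewrite -[RHS]map_id; apply/eq_in_map => x xP /=.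
by rewrite hV index_iota0 // ltnS le_maxs.
Qed.

Set Implicit Arguments. Unset Strict Implicit.

Lemma occ_size P w a : occurs_at P w a -> a + size P <= size w.
Proof. by case/andP. Qed.

Lemma occ_red P w a : occurs_at P w a -> reduce (take (size P) (drop a w)) = P.
Proof. by case/andP => _ /eqP. Qed.

Lemma occ_nth P w a k : occurs_at P w a -> k < size P ->
  nth 0 w (a + k) = nth 0 (Vs (take (size P) (drop a w))) (nth 0 P k).
Proof.
move=> oc lk; have sz := occ_size oc.
have su : size (take (size P) (drop a w)) = size P by rewrite size_takel // size_drop; lia.
rewrite -{2}(occ_red oc) reduceE (nth_map 0) ?su // nth_index.
  by rewrite nth_take // nth_drop.
by rewrite mem_sort mem_undup mem_nth ?su.
Qed.

Lemma occ_memP P w a : occurs_at P w a ->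
  P =i iota 0 (size (Vs (take (size P) (drop a w)))).
Proof.
move=> oc x; rewrite -{1}(occ_red oc) reduceE mem_iota /= add0n.
set u := take _ _; apply/mapP/idP.
  by move=> [y yu ->]; rewrite index_mem mem_sort mem_undup.
move=> lt; exists (nth 0 (Vs u) x).
  have : nth 0 (Vs u) x \in Vs u by rewrite mem_nth.
  by rewrite mem_sort mem_undup.
rewrite index_uniq // sort_uniq undup_uniq //.
Qed.

Lemma gapV (V : seq nat) i j : sorted ltn V -> i <= j -> j < size V ->
  nth 0 V i + (j - i) <= nth 0 V j.
Proof.
move=> /(sortedP 0) sV; elim: j => [|j IH] ij js.
  have -> : i = 0 by lia.
  by rewrite addn0.
case: (eqVneq i j.+1) => [->|ne]; first by rewrite subnn addn0.
have h1 := IH ltac:(lia) ltac:(lia).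
have h2 : nth 0 V j < nth 0 V j.+1 by apply: sV.
lia.
Qed.

Lemma max_case n (C : pred 'I_n) (F : 'I_n -> nat) x :
  x <= \max_(j | C j) F j -> x = 0 \/ exists j, C j /\ x <= F j.
Proof.
move=> h; case: x h => [|x] h; first by left.
right; case: (boolP [exists j, C j && (x.+1 <= F j)]).
  by move=> /existsP [j /andP [cj lj]]; exists j.
rewrite negb_exists => /forallP al.
have : \max_(j | C j) F j <= x.
  apply/bigmax_leqP => j cj; move: (al j); rewrite cj /= -ltnNge ltnS //.
lia.
Qed.

Section Main.
Variables p p' : seq nat.
Hypothesis pp : is_pattern p.
Hypothesis pp' : is_pattern p'.
Hypothesis sz : size p = size p'.
Hypothesis nop : non_overlapping p.
Hypothesis nop' : non_overlapping p'.
Hypothesis mut : mutually_non_overlapping p p'.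
Hypothesis ch : changeable p p'.
Hypothesis ch' : changeable p' p.
Hypothesis neq : p != p'.

Local Notation r := (size p).

Definition isp P := (P == p) || (P == p').
Definition pq P Q := ((P == p) && (Q == p')) || ((P == p') && (Q == p)).

Lemma pq_sym P Q : pq P Q -> pq Q P.
Proof. by case/orP => /andP [/eqP -> /eqP ->]; rewrite /pq !eqxx ?orbT. Qed.

Lemma pq_size P : isp P -> size P = r.
Proof. by case/orP => /eqP ->. Qed.

Lemma pq_isp P Q : pq P Q -> isp P /\ isp Q.
Proof. by case/orP => /andP [/eqP -> /eqP ->]; rewrite /isp !eqxx ?orbT. Qed.

Lemma pq_pat P : isp P -> is_pattern P.
Proof. by case/orP => /eqP ->. Qed.

Lemma pq_ch P Q : pq P Q -> changeable P Q.
Proof. by case/orP => /andP [/eqP -> /eqP ->]. Qed.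

Lemma pq_neq P Q : pq P Q -> P != Q.
Proof. by case/orP => /andP [/eqP -> /eqP ->]; rewrite // eq_sym. Qed.

Lemma pq_ex P : isp P -> exists Q, pq P Q.
Proof.
case/orP => /eqP ->; [exists p' | exists p]; by rewrite /pq !eqxx ?orbT.
Qed.

Lemma pq_uniq P Q Q' : pq P Q -> pq P Q' -> Q = Q'.
Proof.
move=> h1 h2; move: h1 h2 (pq_neq h1) (pq_neq h2).
by case/orP => /andP [/eqP -> /eqP ->]; case/orP => /andP [/eqP e /eqP ->] //;
  rewrite e eqxx.
Qed.

Lemma p_ne0 : p != [::].
Proof.
apply/negP => /eqP e; move: neq sz; rewrite e /= => ne /esym /size0nil e'.
by rewrite e' in ne.
Qed.

Lemma pq_mem P Q : pq P Q -> P =i Q.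
Proof.
have mx : maxs p = maxs p' by case/and5P: ch => _ _ _ /eqP.
have ne' : p' != [::].
  by apply/negP => /eqP e'; move: p_ne0 sz; rewrite e' /= -size_eq0 => ne e2; move: ne; rewrite e2.
have e : p =i p' by move=> x; rewrite (pat_mem _ pp p_ne0) (pat_mem _ pp' ne') mx.
by case/orP => /andP [/eqP -> /eqP ->].
Qed.

Lemma pq_headlast P Q : pq P Q -> nth 0 P 0 = nth 0 Q 0 /\ nth 0 P r.-1 = nth 0 Q r.-1.
Proof.
move=> h; have := pq_ch h; case/and5P=> /eqP s1 /eqP h1 /eqP l1 _ _.
have sP : size P = r by apply: pq_size; case: (pq_isp h).
split; first by move: h1; case: P {h s1 sP l1} => [|x P]; case: Q => [|y Q].
by rewrite -sP !nth_last -s1 nth_last.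
Qed.

Lemma NOV P Q k : isp P -> isp Q -> 1 < k < r ->
  reduce (drop (r - k) P) != reduce (take k Q).
Proof.
move=> hP hQ /andP [k1 kr].
move: (nop) (nop') (mut); rewrite /non_overlapping /mutually_non_overlapping.
move=> /forallP /(_ (Ordinal kr)) /= /implyP /(_ k1) n1.
rewrite -sz => /forallP /(_ (Ordinal kr)) /= /implyP /(_ k1) n2.
case/andP=> _ /forallP /(_ (Ordinal kr)) /= /implyP /(_ k1) /andP [m1 m2].
case/orP: hP => /eqP ->; case/orP: hQ => /eqP ->; rewrite eq_sym //.
Qed.

Lemma OV P Q w a b : isp P -> isp Q -> occurs_at P w a -> occurs_at Q w b ->
  a < b -> b.+1 < a + r -> False.
Proof.
move=> hP hQ oa ob ab br.
have sP := pq_size hP; have sQ := pq_size hQ.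
have za := occ_size oa; have zb := occ_size ob.
rewrite sP in za; rewrite sQ in zb.
have hk : 1 < a + r - b < r by clear -ab br; apply/andP; split; lia.
have := NOV hP hQ hk.
move ek : (a + r - b) => k.
rewrite -{1}(occ_red oa) -{1}(occ_red ob) reduce_drop reduce_take sP sQ.
suff -> : drop (r - k) (take r (drop a w)) = take k (take r (drop b w)) by rewrite eqxx.
clear oa ob hP hQ.
apply: (@eq_from_nth _ 0).
  rewrite size_drop size_takel ?size_takel ?size_drop; lia.
move=> i; rewrite size_drop size_takel ?size_drop; last lia.
move=> ilt.
rewrite nth_drop nth_take; last lia.
rewrite nth_take; last lia.
rewrite nth_take; last lia.
rewrite !nth_drop; congr (nth 0 w _); lia.
Qed.

Ltac purge := repeat match goal with
 | H : is_true (occurs_at _ _ _) |- _ => clear H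
 | H : is_true (isp _) |- _ => clear H
 | H : is_true (pq _ _) |- _ => clear H
 end.
Ltac lia' := purge; lia.

Definition isocc (w : seq nat) a := occurs_at p w a || occurs_at p' w a.
Definition swp (w : seq nat) a := if occurs_at p w a then p' else p.
Definition win (w : seq nat) a := take r (drop a w).
Definition cands (w : seq nat) q := [seq a <- iota 0 q | isocc w a && (q < a + r.-1)].
Definition phi (w : seq nat) := mkseq (fun q =>
  if cands w q is a :: _ then nth 0 (Vs (win w a)) (nth 0 (swp w a) (q - a))
  else nth 0 w q) (size w).

Lemma isoccP w a : reflect (exists P, isp P /\ occurs_at P w a) (isocc w a).
Proof.
apply: (iffP orP).
  by case=> h; [exists p | exists p']; rewrite /isp eqxx ?orbT.
by move=> [P [/orP [/eqP -> | /eqP ->] h]]; [left | right].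
Qed.

Lemma occ_swp P Q w a : pq P Q -> occurs_at P w a -> swp w a = Q.
Proof.
rewrite /swp => h oc; case/orP: h => /andP [/eqP eP /eqP ->].
  by rewrite -eP oc.
case: ifP => // o2; move: (occ_red o2) (occ_red oc); rewrite eP -sz => -> e.
by move: neq; rewrite e eqxx.
Qed.

Lemma occ_win P w a : isp P -> occurs_at P w a -> win w a = take (size P) (drop a w).
Proof. by move=> h _; rewrite /win (pq_size h). Qed.

Lemma cands_mem w q b : b \in cands w q -> [/\ isocc w b, b < q & q < b + r.-1].
Proof. by rewrite mem_filter mem_iota /= add0n => /andP [/andP [-> ->] ->]. Qed.

Lemma cands_eq P w a k b : isp P -> occurs_at P w a -> k < r ->
  b \in cands w (a + k) -> b = a.
Proof.
move=> hP oa kr /cands_mem [/isoccP [P' [hP' ob]] h1 h2].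
case: (ltngtP b a) => // c.
  by exfalso; apply: (OV hP' hP ob oa c); lia'.
by exfalso; apply: (OV hP hP' oa ob c); lia'.
Qed.

Lemma phi_size w : size (phi w) = size w.
Proof. by rewrite size_mkseq. Qed.

Lemma phi_in P Q w a k : pq P Q -> occurs_at P w a -> k < r ->
  nth 0 (phi w) (a + k) = nth 0 (Vs (win w a)) (nth 0 Q k).
Proof.
move=> h oa kr; have [hP hQ] := pq_isp h.
have za := occ_size oa; rewrite (pq_size hP) in za.
rewrite nth_mkseq; last lia'.
case e : (cands w (a + k)) => [|b c].
  have knot : (k == 0) || (k == r.-1).
    case: (boolP ((k == 0) || (k == r.-1))) => // /norP [k0 k1].
    have : a \in cands w (a + k).
      rewrite mem_filter mem_iota /=; apply/andP; split; last lia'.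
      by apply/andP; split; [apply/isoccP; exists P | lia'].
    by rewrite e.
  rewrite (occ_nth oa); last by rewrite (pq_size hP).
  rewrite (occ_win hP oa).
  have [hl1 hl2] := pq_headlast h.
  by case/orP: knot => /eqP ->; rewrite ?hl1 ?hl2.
have bin : b \in cands w (a + k) by rewrite e mem_head.
have eb := cands_eq hP oa kr bin; subst b.
by rewrite (occ_swp h oa) addKn.
Qed.

Lemma phi_out w q : q < size w ->
  (forall a, isocc w a -> a < q -> q < a + r.-1 -> False) -> nth 0 (phi w) q = nth 0 w q.
Proof.
move=> qs no; rewrite nth_mkseq //.
case e : (cands w q) => [//|b c].
have : b \in cands w q by rewrite e mem_head.
by case/cands_mem => i1 i2 i3; exfalso; apply: (no b).
Qed.

Definition invw (w : seq nat) := forall q, q < size w -> nth 0 w q <= q.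

Lemma occ_memW P w a : isp P -> occurs_at P w a -> P =i iota 0 (size (Vs (win w a))).
Proof. by move=> hP oa; rewrite (occ_win hP oa); apply: occ_memP. Qed.

Lemma BD P Q w a k : pq P Q -> occurs_at P w a -> invw w -> k < r ->
  nth 0 (Vs (win w a)) (nth 0 Q k) <= a + k.
Proof.
move=> h oa iw kr; have [hP hQ] := pq_isp h.
have sP := pq_size hP; have za := occ_size oa; rewrite sP in za.
have sV : sorted ltn (Vs (win w a)) by apply: sorted_V.
have memP := occ_memW hP oa.
have memQ : Q =i iota 0 (size (Vs (win w a))) by move=> x; rewrite -(pq_mem h).
set V := Vs (win w a) in sV memP memQ *.
have PjV : forall j, j < r -> nth 0 P j < size V.
  by move=> j jr; have := mem_nth 0 (ltac:(by rewrite sP) : j < size P); rewrite memP mem_iota.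
have QkV : nth 0 Q k < size V.
  have sQ := pq_size hQ.
  by have := mem_nth 0 (ltac:(by rewrite sQ) : k < size Q); rewrite memQ mem_iota.
have wj : forall j, j < r -> nth 0 V (nth 0 P j) <= a + j.
  move=> j jr; rewrite /V (occ_win hP oa) -(occ_nth oa) ?sP //.
  apply: iw; lia'.
have kP : k < size P by rewrite sP.
case: (eqVneq (nth 0 Q k) 0) => [x0|xn0].
  have := gapV sV (leq0n (nth 0 P 0)) (PjV 0 ltac:(lia')).
  have := wj 0 ltac:(lia'); rewrite x0; lia'.
have := pq_ch h; case/and5P => _ _ _ _ /forallP /(_ (Ordinal kP)) /=.
rewrite leq_max => /orP [] /max_case [x0|[j [cj xj]]].
- have := gapV sV (leq0n (nth 0 P 0)) (PjV 0 ltac:(lia')).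
  have := wj 0 ltac:(lia'); rewrite x0; lia'.
- have := gapV sV xj (PjV j ltac:(by rewrite -sP)).
  have := wj j ltac:(by rewrite -sP); move: cj; lia'.
- have := gapV sV (leq0n (nth 0 P 0)) (PjV 0 ltac:(lia')).
  have := wj 0 ltac:(lia'); rewrite x0; lia'.
- have jr : j < r by rewrite -sP.
  have := gapV sV (ltac:(lia') : nth 0 Q k <= nth 0 P j) (PjV j jr).
  have := wj j jr; move: cj xj xn0; lia'.
Qed.

Lemma phi_win P Q w a : pq P Q -> occurs_at P w a ->
  win (phi w) a = map (nth 0 (Vs (win w a))) Q.
Proof.
move=> h oa; have [hP hQ] := pq_isp h.
have za := occ_size oa; rewrite (pq_size hP) in za.
have sQ := pq_size hQ.
apply: (@eq_from_nth _ 0).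
  by rewrite size_map /win size_takel ?sQ // size_drop phi_size; lia'.
move=> i; rewrite /win size_takel; last by rewrite size_drop phi_size; lia'.
move=> ir; rewrite nth_take // nth_drop (phi_in h oa ir) (nth_map 0) // sQ //.
Qed.

Lemma phi_occ1 P Q w a : pq P Q -> occurs_at P w a -> occurs_at Q (phi w) a.
Proof.
move=> h oa; have [hP hQ] := pq_isp h.
have za := occ_size oa; rewrite (pq_size hP) in za.
have sQ := pq_size hQ.
apply/andP; split; first by rewrite phi_size sQ.
rewrite sQ -/(win (phi w) a) (phi_win h oa) reduce_mapV //; first exact: sorted_V.
by move=> x; rewrite -(pq_mem h); apply: occ_memW.
Qed.

Lemma occ_same X Y v a : isp X -> isp Y -> occurs_at X v a -> occurs_at Y v a -> X = Y.
Proof.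
move=> hX hY oX oY; rewrite -(occ_red oX) -(occ_red oY).
by rewrite (pq_size hX) (pq_size hY).
Qed.

Lemma phi_occ2 P w a : isp P -> occurs_at P (phi w) a -> isocc w a.
Proof.
move=> hP oa; case: (boolP (isocc w a)) => // nocc; exfalso.
have za := occ_size oa; rewrite (pq_size hP) phi_size in za.
suff ew : win (phi w) a = win w a.
  move/negP: nocc; apply; apply/isoccP; exists P; split => //.
  apply/andP; split; first by rewrite (pq_size hP).
  by rewrite (pq_size hP) -/(win w a) -ew /win -(pq_size hP) (occ_red oa).
apply: (@eq_from_nth _ 0).
  by rewrite /win !size_takel ?size_drop ?phi_size //; lia'.
move=> i; rewrite /win size_takel; last by rewrite size_drop phi_size; lia'.
move=> ir; rewrite !nth_take // !nth_drop.
apply: phi_out; first lia'.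
move=> b /isoccP [Pb [hPb ob]] h1 h2.
have [Qb hb] := pq_ex hPb.
have oQ := phi_occ1 hb ob.
have hQb := (pq_isp hb).2.
case: (ltngtP b a) => c.
- by apply: (OV hQb hP oQ oa c); lia'.
- by apply: (OV hP hQb oa oQ c); lia'.
- by move/negP: nocc; apply; rewrite -c; apply/isoccP; exists Pb.
Qed.

Lemma phi_occ P Q w a : pq P Q -> occurs_at P (phi w) a = occurs_at Q w a.
Proof.
move=> h; have [hP hQ] := pq_isp h.
apply/idP/idP; last by apply: phi_occ1; apply: pq_sym.
move=> oa; have /isoccP [P0 [hP0 o0]] := phi_occ2 hP oa.
have [Q0 h0] := pq_ex hP0.
have e := occ_same (pq_isp h0).2 hP (phi_occ1 h0 o0) oa.
subst Q0.
by rewrite (pq_uniq h (pq_sym h0)).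
Qed.

Lemma phi_inv w : invw w -> invw (phi w).
Proof.
move=> iw q; rewrite phi_size => qs.
case e : (cands w q) => [|b c].
  rewrite phi_out //; first exact: iw.
  move=> b ib h1 h2.
  have : b \in cands w q by rewrite mem_filter mem_iota /= ib h1 h2.
  by rewrite e.
have : b \in cands w q by rewrite e mem_head.
case/cands_mem => /isoccP [P [hP ob]] h1 h2.
have [Q h] := pq_ex hP.
have -> : q = b + (q - b) by lia'.
rewrite (phi_in h ob); last lia'.
apply: BD h ob iw _; lia'.
Qed.

Lemma phi_invol w : phi (phi w) = w.
Proof.
apply: (@eq_from_nth _ 0); first by rewrite !phi_size.
move=> q; rewrite !phi_size => qs.
case e : (cands w q) => [|b c].
  rewrite phi_out ?phi_size //.
    rewrite phi_out //.
    move=> b ib h1 h2.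
    have : b \in cands w q by rewrite mem_filter mem_iota /= ib h1 h2.
    by rewrite e.
  move=> b /isoccP [P [hP ob]] h1 h2.
  have ib := phi_occ2 hP ob.
  have : b \in cands w q by rewrite mem_filter mem_iota /= ib h1 h2.
  by rewrite e.
have : b \in cands w q by rewrite e mem_head.
case/cands_mem => /isoccP [P [hP ob]] h1 h2.
have [Q h] := pq_ex hP.
have [_ hQ] := pq_isp h.
have oQ := phi_occ1 h ob.
have -> : q = b + (q - b) by lia'.
rewrite (phi_in (pq_sym h) oQ); last lia'.
have -> : Vs (win (phi w) b) = Vs (win w b).
  rewrite (phi_win h ob) {1}/Vs SU_map //; first exact: sorted_V.
  by move=> x; rewrite -(pq_mem h); apply: occ_memW.
rewrite (occ_nth ob); last by rewrite (pq_size hP); lia'.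
by rewrite (occ_win hP ob).
Qed.

Section Tup.
Variable n : nat.

Definition phiT (e : n.-tuple 'I_n) : n.-tuple 'I_n :=
  [tuple insubd (tnth e i) (nth 0 (phi (map val e)) i) | i < n].

Lemma nth_mapval (e : n.-tuple 'I_n) (i : 'I_n) : nth 0 (map val e) i = tnth e i.
Proof. by rewrite (nth_map (tnth e i)) ?size_tuple // -tnth_nth. Qed.

Lemma invseqP (e : n.-tuple 'I_n) : e \in invseq n -> invw (map val e).
Proof.
rewrite inE => /forallP al q; rewrite size_map size_tuple => qn.
by have := al (Ordinal qn); rewrite -(nth_mapval e (Ordinal qn)).
Qed.

Lemma invseqP' (e : n.-tuple 'I_n) : invw (map val e) -> e \in invseq n.
Proof.
move=> iw; rewrite inE; apply/forallP => i.
by rewrite -nth_mapval; apply: iw; rewrite size_map size_tuple.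
Qed.

Lemma mapval_phiT e : e \in invseq n -> map val (phiT e) = phi (map val e).
Proof.
move=> /invseqP iw; have iw' := phi_inv iw.
apply: (@eq_from_nth _ 0).
  by rewrite phi_size size_map (size_tuple (phiT e)) size_map size_tuple.
move=> q; rewrite size_map size_tuple => qn.
rewrite (nth_mapval _ (Ordinal qn)) tnth_mktuple /=.
rewrite insubdK //; rewrite /in_mem /=.
have := iw' q; rewrite phi_size size_map size_tuple => /(_ qn) h.
exact: (leq_ltn_trans h qn).
Qed.

Lemma phiT_inv e : e \in invseq n -> phiT e \in invseq n.
Proof.
move=> ie; apply: invseqP'; rewrite mapval_phiT //.
by apply: phi_inv; apply: invseqP.
Qed.

Lemma phiT_invol e : e \in invseq n -> phiT (phiT e) = e.
Proof.
move=> ie; apply: val_inj; apply: (inj_map val_inj) => /=.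
by rewrite mapval_phiT ?phiT_inv // mapval_phiT // phi_invol.
Qed.

Lemma Em_phiT P Q e : pq P Q -> e \in invseq n -> Em P (phiT e) = Em Q e.
Proof.
move=> h ie; apply/setP => i; rewrite !inE mapval_phiT //.
exact: phi_occ.
Qed.

Lemma card_le (A B : {set n.-tuple 'I_n}) :
  A \subset invseq n -> (forall e, e \in A -> phiT e \in B) -> #|A| <= #|B|.
Proof.
move=> sA fAB.
rewrite -(card_in_imset (f := phiT)).
  by apply: subset_leq_card; apply/subsetP => x /imsetP [e eA ->]; apply: fAB.
move=> x y xA yA e.
by rewrite -(phiT_invol (subsetP sA _ xA)) e phiT_invol // (subsetP sA).
Qed.

End Tup.

Lemma mem_sel n (D : {set n.-tuple 'I_n}) (X : pred (n.-tuple 'I_n)) e :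
  (e \in [set x in D | X x]) = (e \in D) && X e.
Proof. by rewrite inE. Qed.

Lemma pqpp' : pq p p'.
Proof. by rewrite /pq !eqxx. Qed.

Lemma main_sec :
  (forall (n : nat) (S T : {set 'I_n}),
     #|[set e in invseq n | (Em p e == S) && (Em p' e == T)]| =
     #|[set e in invseq n | (Em p e == T) && (Em p' e == S)]|)
  /\ super_strongly_Wilf_equiv p p'.
Proof using pp pp' sz nop nop' mut ch ch' neq.
have h1 := pqpp'; have h2 := pq_sym h1.
have sub : forall n (X : pred (n.-tuple 'I_n)), [set e in invseq n | X e] \subset invseq n.
  by move=> n X; apply/subsetP => e; rewrite mem_sel => /andP [].
split.
  have le : forall n (S T : {set 'I_n}),
     #|[set e in invseq n | (Em p e == S) && (Em p' e == T)]| <=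
     #|[set e in invseq n | (Em p e == T) && (Em p' e == S)]|.
    move=> n S T; apply: card_le; first exact: sub.
    move=> e; rewrite !mem_sel => /andP [ie /andP [eS eT]].
    by rewrite phiT_inv // (Em_phiT h1 ie) (Em_phiT h2 ie) eS eT.
  by move=> n S T; apply/eqP; rewrite eqn_leq !le.
move=> n T; apply/eqP; rewrite eqn_leq; apply/andP; split; apply: card_le; try exact: sub.
  move=> e; rewrite !mem_sel => /andP [ie eT].
  by rewrite phiT_inv // (Em_phiT h2 ie) eT.
move=> e; rewrite !mem_sel => /andP [ie eT].
by rewrite phiT_inv // (Em_phiT h1 ie) eT.
Qed.

End Main.

Theorem mainTheorem2 (p p' : seq nat) :
  is_pattern p -> is_pattern p' -> size p = size p' ->
  non_overlapping p -> non_overlapping p' ->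
  mutually_non_overlapping p p' ->
  interchangeable p p' ->
  (forall (n : nat) (S T : {set 'I_n}),
     #|[set e in invseq n | (Em p e == S) && (Em p' e == T)]| =
     #|[set e in invseq n | (Em p e == T) && (Em p' e == S)]|)
  /\ super_strongly_Wilf_equiv p p'.
Proof.
move=> pp pp' sz nop nop' mut /andP [ch ch'].
case: (eqVneq p p') => [e|neq].
  subst p'; split => // n S T.
  by apply: eq_card => e; rewrite !mem_sel [X in _ && X]andbC.
exact: (main_sec pp pp' sz nop nop' mut ch ch' neq).
Qed.
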